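(* Let $Z_1,\dots,Z_k$ be independent continuous random variables, each symmetric about $0$ (with mean $0$), and let $Y=\max(Z_1,\dots,Z_k)$ with probability density function $f_Y$. Then for every $x\ge 0$, $f_Y(x)\ge f_Y(-x)$. *)

(* Defs.v *)
From HB Require Import structures.
From mathcomp Require Import all_boot all_order all_algebra.
From mathcomp Require Import all_classical all_reals all_analysis.
Set Implicit Arguments.
Unset Strict Implicit.
Unset Printing Implicit Defensive.
Import Order.TTheory GRing.Theory Num.Theory.
Local Open Scope classical_set_scope.
Local Open Scope ring_scope.

Section defs.
Context (d : measure_display) (T : measurableType d) (R : realType)
  (P : probability T R).

Definition independent_RVs (k : nat) (Z : 'I_k -> T -> R) : Prop :=
  forall B : 'I_k -> set R, (forall i, measurable (B i)) ->
    P (\bigcap_(i in [set: 'I_k]) (Z i @^-1` B i)) =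
    (\prod_(i < k) P (Z i @^-1` B i))%E.

Definition has_density (X : T -> R) (f : R -> R) : Prop :=
  [/\ measurable_fun setT f, (forall x, 0 <= f x) &
      forall B : set R, measurable B ->
        P (X @^-1` B) = (\int[lebesgue_measure]_(x in B) (f x)%:E)%E].

Definition symmetric_about0 (X : T -> R) : Prop :=
  forall B : set R, measurable B ->
    P (X @^-1` B) = P ((fun w => - X w) @^-1` B).

Definition mean_zero (X : T -> R) : Prop :=
  P.-integrable setT (EFin \o X) /\ ('E_P[X] = 0)%E.

Definition is_max_of (k : nat) (Z : 'I_k -> T -> R) (Y : T -> R) : Prop :=
  forall w, (forall i, Z i w <= Y w) /\ exists i, Y w = Z i w.

End defs.

(* Main.v *)
Require Import Defs.
From HB Require Import structures.
From mathcomp Require Import all_boot all_order all_algebra.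
From mathcomp Require Import all_classical all_reals all_analysis.
From mathcomp Require Import ring lra.
Import Order.TTheory GRing.Theory Num.Theory.
Local Open Scope classical_set_scope.
Local Open Scope ring_scope.

Module Lemma25Helpers.
Import numFieldNormedType.Exports.
Import measurable_realfun.

Lemma lebesgue_oppr (R : realType) (A : set R) : measurable A ->
  lebesgue_measure ((-%R) @^-1` A) = lebesgue_measure A.
Proof.
move=> mA.
have := @lebesgue_measure_unique R (@pushforward _ _ (measurableTypeR R) (measurableTypeR R) R lebesgue_measure (-%R)).
move=> /(_ (@measurable_realfun.oppr_measurable R setT)) H.
rewrite [RHS]H //.
move=> _ [[a b] _ <-] /=.
rewrite /pushforward.
have -> : (-%R) @^-1` `]a, b]%classic = `[- b, - a[%classic :> set R.
  apply/seteqP; split => x /=; rewrite !in_itv /= => /andP[h1 h2];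
    apply/andP; split; lra.
by rewrite !lebesgue_measure_itv /= !lte_fin ltrN2 opprK -!EFinD addrC.
Qed.

Lemma prod_ineq (R : realFieldType) (I : Type) (s : seq I) (u v : I -> R) :
  (forall i, 1/2 <= v i) -> (forall i, v i <= u i) -> (forall i, u i <= 1) ->
  [/\ 0 <= \prod_(i <- s) (1 - u i),
      \prod_(i <- s) (1 - u i) <= \prod_(i <- s) (1 - v i),
      \prod_(i <- s) (1 - u i) <= \prod_(i <- s) v i &
      \prod_(i <- s) (1 - v i) - \prod_(i <- s) (1 - u i) <=
      \prod_(i <- s) u i - \prod_(i <- s) v i].
Proof.
move=> hv hvu hu; elim: s => [|i s [B0 BA BV ABUV]].
  by rewrite !big_nil; split; lra.
rewrite !big_cons.
have := hv i; have := hvu i; have := hu i.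
move: B0 BA BV ABUV.
set U := \prod_(j <- s) u j; set V := \prod_(j <- s) v j.
set A := \prod_(j <- s) (1 - v j); set B := \prod_(j <- s) (1 - u j).
move=> B0 BA BV ABUV h1 h2 h3.
split.
- by apply: mulr_ge0; lra.
- by apply: ler_pM; lra.
- by apply: ler_pM; lra.
- have e1 : (1 - v i) * A - (1 - u i) * B = (1 - v i) * (A - B) + B * (u i - v i) by ring.
  have e2 : u i * U - v i * V = u i * (U - V) + V * (u i - v i) by ring.
  rewrite e1 e2; apply: lerD.
  + apply: (@le_trans _ _ (u i * (A - B))); first by apply: ler_wpM2r; lra.
    by apply: ler_wpM2l; lra.
  + by apply: ler_wpM2r; lra.
Qed.

Ltac mylra := repeat match goal with H : @eq (set _) _ _ |- _ => clear H | H : symmetric_about0 _ _ |- _ => clear H | H : has_density _ _ _ |- _ => clear H | H : is_max_of _ _ |- _ => clear H | H : independent_RVs _ _ |- _ => clear H end; lra.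

Section prob.
Context {d : measure_display} {T : measurableType d} {R : realType} {P : probability T R}.

Definition pr (A : set T) : R := fine (P A).

Lemma prE A : measurable A -> P A = (pr A)%:E.
Proof. by move=> mA; rewrite /pr fineK// fin_num_measure. Qed.

Lemma pr_le1 A : measurable A -> pr A <= 1.
Proof. by move=> mA; rewrite -lee_fin -prE// probability_le1. Qed.

Lemma prT : pr setT = 1.
Proof. by rewrite /pr probability_setT. Qed.

Lemma prU A B : measurable A -> measurable B -> A `&` B = set0 ->
  pr (A `|` B) = pr A + pr B.
Proof.
move=> mA mB AB; apply: EFin_inj; rewrite EFinD -!prE//; last exact: measurableU.
exact: measureU.
Qed.

Lemma pr_le A B : measurable A -> measurable B -> A `<=` B -> pr A <= pr B.
Proof. by move=> mA mB AB; rewrite -lee_fin -!prE// le_measure// inE. Qed.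

Definition mcdf (X : T -> R) y := pr (X @^-1` `]-oo, y]).

Lemma mX (X : {RV P >-> R}) (B : set R) : measurable B -> measurable (X @^-1` B).
Proof. exact: measurable_funPTI. Qed.

Lemma point0 (X : {RV P >-> R}) f y : has_density P X f -> pr (X @^-1` [set y]) = 0.
Proof. by case=> _ _ h; rewrite /pr h ?integral_set1//; exact: measurable_set1. Qed.

Lemma mcdf_mono (X : {RV P >-> R}) a b : a <= b -> mcdf X a <= mcdf X b.
Proof.
move=> ab; apply: pr_le; try exact: mX.
by move=> w /=; rewrite !in_itv /= => h; exact: le_trans h ab.
Qed.

Lemma mcdf_le1 (X : {RV P >-> R}) a : mcdf X a <= 1.
Proof. by apply: pr_le1; exact: mX. Qed.

Lemma mcdf_sym (X : {RV P >-> R}) f y : has_density P X f ->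
  symmetric_about0 P X -> mcdf X (- y) = 1 - mcdf X y.
Proof.
move=> hd hs.
have e1 : X @^-1` `]-oo, y] `|` X @^-1` `]y, +oo[ = setT.
  apply/seteqP; split => w //= _; rewrite !in_itv /= andbT.
  by case: (leP (X w) y); [left|right].
have e2 : X @^-1` `]-oo, y] `&` X @^-1` `]y, +oo[ = set0.
  apply/seteqP; split => w //=. rewrite !in_itv /= andbT. move=> -[h1 h2]. exfalso; mylra.
have e3 : X @^-1` `[y, +oo[ = X @^-1` [set y] `|` X @^-1` `]y, +oo[.
  apply/seteqP; split => w /=; rewrite !in_itv /= !andbT.
    by rewrite le_eqVlt => /orP[/eqP ->|h]; [left|right].
  by case=> [->|h]; mylra.
have e23 : X @^-1` [set y] `&` X @^-1` `]y, +oo[ = set0.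
  apply/seteqP; split => w //=; rewrite !in_itv /= andbT => -[-> h2]; exfalso; mylra.
have e4 : (fun w => - X w) @^-1` `]-oo, - y] = X @^-1` `[y, +oo[.
  apply/seteqP; split => w /=; rewrite !in_itv /= ?andbT => h; mylra.
have hT : pr (X @^-1` `]-oo, y] `|` X @^-1` `]y, +oo[) = 1 by rewrite e1 prT.
rewrite prU in hT; try exact: mX; last by [].
rewrite /mcdf /pr hs; last exact: measurable_itv.
rewrite e4 -/(pr _) e3 prU; try exact: mX; last by [].
by rewrite (point0 _ _ _ hd) -/(pr _); mylra.
Qed.

Lemma mcdf_max k (Z : 'I_k -> {RV P >-> R}) (Y : {RV P >-> R}) y :
  independent_RVs P (fun i => Z i : T -> R) ->
  is_max_of (fun i => Z i : T -> R) Y ->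
  mcdf Y y = \prod_(i < k) mcdf (Z i) y.
Proof.
move=> hind hmax.
have := hind (fun=> `]-oo, y]%classic) (fun=> measurable_itv _).
have -> : \bigcap_(i in [set: 'I_k]) ((Z i : T -> R) @^-1` `]-oo, y]) =
    Y @^-1` `]-oo, y].
  apply/seteqP; split => w /=.
  - move=> h; have [_ [i ->]] := hmax w; exact: (h i I).
  - rewrite in_itv /= => hy i _; rewrite /= in_itv /=.
    exact: le_trans ((hmax w).1 i) hy.
move=> h; rewrite /mcdf /pr h.
rewrite (eq_bigr (fun i => (pr (Z i @^-1` `]-oo, y]))%:E)); last by move=> i _; rewrite -prE //; exact: mX.
by rewrite prodEFin.
Qed.

Lemma prY_itv (Y : {RV P >-> R}) a b : a <= b ->
  pr (Y @^-1` `]a, b]) = mcdf Y b - mcdf Y a.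
Proof.
move=> ab.
have e1 : Y @^-1` `]-oo, b] = Y @^-1` `]-oo, a] `|` Y @^-1` `]a, b].
  apply/seteqP; split => w /=; rewrite !in_itv /=.
    by move=> h; case: (leP (Y w) a) => h'; [left|right; apply/andP; split].
  by case=> [h|/andP[h1 h2]]; mylra.
have e2 : Y @^-1` `]-oo, a] `&` Y @^-1` `]a, b] = set0.
  apply/seteqP; split => w //=; rewrite !in_itv /= => -[h1 /andP[h2 h3]]; exfalso; mylra.
rewrite /mcdf e1 prU; try exact: mX; last by [].
mylra.
Qed.

Lemma prY_ball (Y : {RV P >-> R}) fY (z r : R) : has_density P Y fY -> 0 < r ->
  pr (Y @^-1` ball z r) = mcdf Y (z + r) - mcdf Y (z - r).
Proof.
move=> hd r0.
have e1 : Y @^-1` `]z - r, z + r] = Y @^-1` ball z r `|` Y @^-1` [set z + r].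
  apply/seteqP; split => w /=; rewrite ball_itv /= !in_itv /=.
    move=> /andP[h1 h2]; rewrite le_eqVlt in h2; case/orP: h2 => [/eqP ->|h2].
      by right.
    by left; apply/andP; split.
  by case=> [/andP[h1 h2]|->]; apply/andP; split; mylra.
have e2 : Y @^-1` ball z r `&` Y @^-1` [set z + r] = set0.
  apply/seteqP; split => w //=; rewrite ball_itv /= !in_itv /= => -[/andP[h1 h2] h3]; exfalso; mylra.
have zr : z - r <= z + r by mylra.
have := prY_itv Y _ _ zr; rewrite e1 prU; try exact: mX.
- by rewrite (point0 _ _ _ hd) addr0.
- by apply: mX; exact: measurable_realfun.measurable_ball.
- by [].
Qed.

End prob.
Arguments pr {d T R} P A.
Arguments mcdf {d T R} P X y.

Section leb.
Context (R : realType).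
Local Notation mu := (@lebesgue_measure R).

Lemma int_bounds (f : R -> R) (B : set R) c : measurable B -> measurable_fun setT f ->
  (forall y, 0 <= f y) -> 0 <= c ->
  (\int[mu]_(y in B) (f y)%:E <= c%:E * mu B + \int[mu]_(y in B) `|(f y - c)%:E|)%E /\
  (c%:E * mu B <= \int[mu]_(y in B) (f y)%:E + \int[mu]_(y in B) `|(f y - c)%:E|)%E.
Proof.
move=> mB mf f0 c0.
have mfB : measurable_fun B (EFin \o f).
  by apply/measurable_EFinP; exact: measurable_funS mf.
have maB : measurable_fun B (fun y => `|(f y - c)%:E|)%E.
  apply: measurableT_comp => //; apply/measurable_EFinP.
  apply: (@measurable_funS _ _ _ _ setT) => //.
  exact: (measurable_realfun.measurable_funB mf (measurable_cst c)).
rewrite -(integral_cst mu mB c%:E).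
split.
- rewrite -ge0_integralD //.
  apply: ge0_le_integral => //.
  all: try (by move=> y _; rewrite lee_fin).
  all: try (by apply: emeasurable_funD => //; exact: measurable_cst).
  move=> y _ /=; rewrite -EFinD lee_fin.
    by have := ler_norm (f y - c); lra.
- rewrite -ge0_integralD //.
  apply: ge0_le_integral => //.
  all: try (by move=> y _; rewrite lee_fin).
  all: try (by apply: emeasurable_funD => //; exact: measurable_cst).
  move=> y _ /=; rewrite ?abse_EFin -EFinD lee_fin.
    by have := ler_norm (c - f y); rewrite distrC; lra.
Qed.

End leb.

Section leb2.
Context (R : realType).
Local Notation mu := (@lebesgue_measure R).

Lemma lebpt_small (f : R -> R) z e : 0 < e -> lebesgue_pt f z ->
  \forall r \near 0^'+,
    (\int[mu]_(y in ball z r) `|(f y - f z)%:E| < ((r *+ 2) * e)%:E)%E.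
Proof.
move=> e0 /fine_cvgP[fin c].
have n := cvgr0_norm_lt _ c _ e0.
near=> r.
have r0 : 0 < r by near: r; exact: nbhs_right_gt.
have hf : davg f z r \is a fin_num by near: r; exact: fin.
have hn : `|fine (davg f z r)| < e by near: r; exact: n.
have m0 : 0 < r *+ 2 by rewrite pmulrn_lgt0.
move: hf hn; rewrite /davg /iavg lebesgue_measure_ball ?ltW// inver (gt_eqF m0).
have : (0 <= \int[mu]_(y in ball z r) `|((center (f z) \o f) y)%:E|)%E.
  by apply: integral_ge0 => y _.
case: (\int[mu]_(y in ball z r) `|((center (f z) \o f) y)%:E|)%E => [i| |] //=.
- move=> i0 _ hn; rewrite lte_fin.
  have h1 := le_lt_trans (ler_norm _) hn.
  by rewrite ltr_pdivrMl // in h1.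
- by move=> _; rewrite mulry gtr0_sg ?invr_gt0 // mul1e.
Unshelve. all: by end_near. Qed.


Lemma ereal_contra (a b m e : R) (Ix In Jx Jn : \bar R) : 0 < m -> e = (b - a) / 4 ->
  0 < e -> (0 <= Ix)%E -> (0 <= In)%E -> (0 <= Jn)%E ->
  (Jx <= a%:E * m%:E + Ix)%E -> (b%:E * m%:E <= Jn + In)%E -> (Jn <= Jx)%E ->
  (Ix < (m * e)%:E)%E -> (In < (m * e)%:E)%E -> False.
Proof.
move=> m0 ee e0.
case: Ix => [ix| |] //; case: In => [iN| |] //; case: Jn => [jn| |] //;
  case: Jx => [jx| |] //; rewrite ?lee_fin ?lte_fin //.
move=> i0 n0 j0 h1 h2 h3 h4 h5.
have hb : b = a + 4 * e by rewrite ee; field.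
have me := mulr_gt0 m0 e0.
subst b; nra.
Qed.

Lemma key_lebpt (f : R -> R) x : (forall y, 0 <= f y) -> measurable_fun setT f ->
  lebesgue_pt f x -> lebesgue_pt f (- x) ->
  (\forall r \near (0:R)^'+, (\int[mu]_(y in ball (- x)%R r) (f y)%:E <=
                          \int[mu]_(y in ball x r) (f y)%:E)%E) ->
  f (- x) <= f x.
Proof.
move=> f0 mf lx lnx hJ.
rewrite leNgt; apply/negP => hlt.
have e0 : 0 < (f (- x) - f x) / 4 by apply: divr_gt0; lra.
have n1 := lebpt_small _ _ _ e0 lx.
have n2 := lebpt_small _ _ _ e0 lnx.
have [r [r0 [h1 [h2 h3]]]] :=
  filter_ex (filterI (nbhs_right_gt (0 : R)) (filterI n1 (filterI n2 hJ))).
have m0 : 0 < r *+ 2 by rewrite pmulrn_lgt0.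
have [bx1 _] := int_bounds _ _ _ _ (measurable_realfun.measurable_ball x r) mf f0 (f0 x).
have [_ bn2] := int_bounds _ _ _ _ (measurable_realfun.measurable_ball (- x) r) mf f0 (f0 (- x)).
rewrite !(lebesgue_measure_ball _ (ltW r0)) in bx1 bn2.
apply: (ereal_contra _ _ _ _ _ _ _ _ m0 erefl e0 _ _ _ bx1 bn2 h3 h1 h2).
- by apply: integral_ge0 => y _.
- by apply: integral_ge0 => y _.
- by apply: integral_ge0 => y _; rewrite lee_fin.
Qed.

End leb2.


Lemma ball_ineq d (T : measurableType d) (R : realType) (P : probability T R) k
  (Z : 'I_k -> {RV P >-> R}) (Y : {RV P >-> R}) fY (x r : R) :
  independent_RVs P (fun i => Z i : T -> R) ->
  (forall i, exists f : R -> R, has_density P (Z i) f) ->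
  (forall i, symmetric_about0 P (Z i)) ->
  is_max_of (fun i => Z i : T -> R) Y -> has_density P Y fY ->
  0 < r -> r <= x ->
  pr P (Y @^-1` ball (- x) r) <= pr P (Y @^-1` ball x r).
Proof.
move=> hind hd hs hmax hY r0 rx.
rewrite (prY_ball _ _ _ _ hY r0) (prY_ball _ _ _ _ hY r0) !(mcdf_max _ _ _ _ hind hmax).
have -> : - x + r = - (x - r) by ring.
have -> : - x - r = - (x + r) by ring.
have Fs (i : 'I_k) (t : R) : mcdf P (Z i) (- t) = 1 - mcdf P (Z i) t.
  by have [f hf] := hd i; exact: (mcdf_sym _ _ _ hf (hs i)).
rewrite !(eq_bigr _ (fun i _ => Fs i _)).
have c0 : 0 <= x - r by lra.
have ce : x - r <= x + r by lra.
have hv i : 1/2 <= mcdf P (Z i) (x - r).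
  have := mcdf_mono (Z i) _ _ (_ : - (x - r) <= x - r).
  by rewrite Fs; lra.
have [_ _ _ H] := prod_ineq _ _ (index_enum 'I_k) _ _ hv
  (fun i => mcdf_mono (Z i) _ _ ce) (fun i => mcdf_le1 (Z i) (x + r)).
exact: H.
Qed.

Theorem lemma25_aux (d : measure_display) (T : measurableType d) (R : realType)
  (P : probability T R) (k : nat) (Z : 'I_k -> {RV P >-> R}) (Y : {RV P >-> R})
  (fY : R -> R) :
  independent_RVs P (fun i => Z i : T -> R) ->
  (forall i, exists f : R -> R, has_density P (Z i) f) ->
  (forall i, symmetric_about0 P (Z i)) ->
  (forall i, mean_zero P (Z i)) ->
  is_max_of (fun i => Z i : T -> R) Y ->
  has_density P Y fY ->
  {ae (@lebesgue_measure R), forall x : R, 0 <= x -> fY (- x) <= fY x}.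
Proof.
move=> hind hZd hsym _ hmax hYd.
have [mfY fY0 hY] := hYd.
have locf : locally_integrable setT fY.
  split => //; first exact: openT.
  move=> K _ cK.
  have mK : measurable K := measurable_realfun.compact_measurable cK.
  apply: (@le_lt_trans _ _ (\int[lebesgue_measure]_(x in setT) (fY x)%:E)%E).
    under eq_integral do rewrite ger0_norm//.
    apply: ge0_subset_integral => //.
    - by apply/measurable_realfun.measurable_EFinP.
    - by move=> y _; rewrite lee_fin.
  by rewrite -hY // preimage_setT probability_setT ltry.
have [N [mN N0 hN]] := lebesgue_differentiation locf.
have mNN : measurable ((-%R) @^-1` N).
  by have := measurable_realfun.oppr_measurable measurableT mN; rewrite setTI.
exists (N `|` (-%R) @^-1` N); split.
- exact: measurableU.
- apply/eqP; rewrite eq_le measure_ge0 andbT.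
  apply: le_trans (measureU2 _ mN mNN) _.
  change (lebesgue_measure N + lebesgue_measure ((-%R) @^-1` N) <= 0)%E.
  by rewrite lebesgue_oppr // N0 adde0.
- move=> x /= hx.
  have [xN|xN] := pselect (N x); first by left.
  right.
  apply: contrapT => nxN; apply: hx => x0.
  have lx : lebesgue_pt fY x by apply: contrapT => h; apply: xN; exact: hN.
  have lnx : lebesgue_pt fY (- x) by apply: contrapT => h; apply: nxN; exact: hN.
  have [->|xn0] := eqVneq x 0; first by rewrite oppr0.
  have xp : 0 < x by rewrite lt_neqAle eq_sym xn0 x0.
  apply: key_lebpt => //.
  near=> r.
  have r0 : 0 < r by near: r; exact: nbhs_right_gt.
  have rx : r <= x by near: r; exact: nbhs_right_le.
  rewrite -!hY; try exact: measurable_realfun.measurable_ball.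
  rewrite !prE; try (apply: mX; exact: measurable_realfun.measurable_ball).
  rewrite lee_fin; exact: (ball_ineq _ _ _ _ _ _ _ _ _ _ hind hZd hsym hmax hYd r0 rx).
Unshelve. all: by end_near.
Qed.

End Lemma25Helpers.

Theorem lemma25 (d : measure_display) (T : measurableType d) (R : realType)
  (P : probability T R) (k : nat) (Z : 'I_k -> {RV P >-> R}) (Y : {RV P >-> R})
  (fY : R -> R) :
  independent_RVs P (fun i => Z i : T -> R) ->
  (forall i, exists f : R -> R, has_density P (Z i) f) ->
  (forall i, symmetric_about0 P (Z i)) ->
  (forall i, mean_zero P (Z i)) ->
  is_max_of (fun i => Z i : T -> R) Y ->
  has_density P Y fY ->
  {ae (@lebesgue_measure R), forall x : R, 0 <= x -> fY (- x) <= fY x}.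
Proof. exact: Lemma25Helpers.lemma25_aux. Qed.
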